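(* Let $\alpha\ge 0$, let $\mathbf{G}\subset\mathbb{R}^2$ be a ground-truth box (a closed oriented rectangle of positive area not containing the origin) and let $\mathbf{P}\subset\mathbb{R}^2$ be a prediction box (a closed oriented rectangle of positive area). Then $\mathsf{EC\text{-}IoU}(\mathbf{P},\mathbf{G}) = 1$ if and only if $\mathbf{P} = \mathbf{G}$.
   Context: $\rho(x,y)=\sqrt{x^2+y^2}$ is the distance to the origin (the ego position). For a ground-truth box $\mathbf{G}$ with center $(x_{\mathbf{G}},y_{\mathbf{G}})$, define the weight $\omega_{\mathbf{G}}(x,y) = \left[\rho(x_{\mathbf{G}},y_{\mathbf{G}})/\rho(x,y)\right]^{\alpha}$ for $(x,y)\in\mathbf{G}$. For a region $\mathbf{D}\subseteq\mathbf{G}$ let $\mathsf{Weighted\text{-}Area}_{\mathbf{G}}(\mathbf{D}) = \iint_{\mathbf{D}} \omega_{\mathbf{G}}(x,y)\,dA$, and for any region $\mathbf{D}$ let $\mathsf{Area}(\mathbf{D}) = \iint_{\mathbf{D}} 1\,dA$. The Ego-Centric IoU is $$\mathsf{EC\text{-}IoU}(\mathbf{P},\mathbf{G}) = \frac{\mathsf{Weighted\text{-}Area}_{\mathbf{G}}(\mathbf{P}\cap\mathbf{G})}{\mathsf{Weighted\text{-}Area}_{\mathbf{G}}(\mathbf{G}) + \mathsf{Area}(\mathbf{P}) - \mathsf{Area}(\mathbf{P}\cap\mathbf{G})}.$$ *)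

(* Defs.v *)
From HB Require Import structures.
From mathcomp Require Import all_boot all_order all_algebra.
From mathcomp Require Import all_classical all_reals all_analysis.
Set Implicit Arguments. Unset Strict Implicit. Unset Printing Implicit Defensive.
Import Order.TTheory GRing.Theory Num.Theory.
Local Open Scope classical_set_scope.
Local Open Scope ring_scope.

Section Defs.
Variable R : realType.

Definition leb2 := ((@lebesgue_measure R) \x (@lebesgue_measure R))%E.

(* distance to the origin (ego position) *)
Definition rho (p : R * R) : R := Num.sqrt (p.1 ^+ 2 + p.2 ^+ 2).

Definition obox (c : R * R) (a b th : R) : set (R * R) :=
  [set p | exists u v : R, `|u| <= a /\ `|v| <= b /\
     p = (c.1 + u * cos th - v * sin th, c.2 + u * sin th + v * cos th)].

Definition ec_weight (alpha : R) (cG : R * R) (p : R * R) : R :=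
  (rho cG / rho p) `^ alpha.

Definition Area (D : set (R * R)) : \bar R := leb2 D.

Definition Weighted_Area (alpha : R) (cG : R * R) (D : set (R * R)) : \bar R :=
  (\int[leb2]_(p in D) (ec_weight alpha cG p)%:E)%E.

(* EC-IoU(P, G), where G is the ground truth box with center cG *)
Definition EC_IoU (alpha : R) (P G : set (R * R)) (cG : R * R) : R :=
  fine (Weighted_Area alpha cG (P `&` G)) /
  fine (Weighted_Area alpha cG G + Area P - Area (P `&` G))%E.

End Defs.

(* Main.v *)
Set Warnings "-all".
Require Import Defs.
From HB Require Import structures.
From mathcomp Require Import all_boot all_order all_algebra.
From mathcomp Require Import all_classical all_reals all_analysis.
From mathcomp Require Import ring lra.
From mathcomp Require Import measurable_realfun.
Import Order.TTheory GRing.Theory Num.Theory.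
Local Open Scope classical_set_scope.
Local Open Scope ring_scope.

Section Geo.
Variable R : realType.
Implicit Types (c p x y z : R * R) (a b th : R).

Definition Uc c th p : R := cos th * (p.1 - c.1) + sin th * (p.2 - c.2).
Definition Vc c th p : R := - sin th * (p.1 - c.1) + cos th * (p.2 - c.2).

Lemma rot1 (x y c s : R) : c^+2 + s^+2 = 1 -> (c*x + s*y)*c - (-s*x + c*y)*s = x.
Proof. move=> h; transitivity (x * (c^+2+s^+2)); [ring | by rewrite h mulr1]. Qed.
Lemma rot2 (x y c s : R) : c^+2 + s^+2 = 1 -> (c*x + s*y)*s + (-s*x + c*y)*c = y.
Proof. move=> h; transitivity (y * (c^+2+s^+2)); [ring | by rewrite h mulr1]. Qed.
Lemma rot3 (u v c s : R) : c^+2 + s^+2 = 1 -> c*(u*c - v*s) + s*(u*s + v*c) = u.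
Proof. move=> h; transitivity (u * (c^+2+s^+2)); [ring | by rewrite h mulr1]. Qed.
Lemma rot4 (u v c s : R) : c^+2 + s^+2 = 1 -> -s*(u*c - v*s) + c*(u*s + v*c) = v.
Proof. move=> h; transitivity (v * (c^+2+s^+2)); [ring | by rewrite h mulr1]. Qed.

Lemma CS (c s x y : R) : c^+2 + s^+2 = 1 -> (c*x + s*y)^+2 <= x^+2 + y^+2.
Proof.
move=> h; have e : x^+2 + y^+2 - (c*x+s*y)^+2 = (x*s - y*c)^+2.
  transitivity ((x^+2 + y^+2)*(c^+2+s^+2) - (c*x+s*y)^+2); first by rewrite h mulr1.
  ring.
by rewrite -subr_ge0 e sqr_ge0.
Qed.

Lemma abs_le_sq (z k : R) : 0 <= k -> z^+2 <= k^+2 -> `|z| <= k.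
Proof.
move=> k0 h; rewrite ler_norml; apply/andP; split; nra.
Qed.

Lemma CSk {c s x y k : R} : c^+2 + s^+2 = 1 -> 0 <= k -> x^+2 + y^+2 <= k^+2 ->
  `|c*x + s*y| <= k.
Proof. move=> h k0 hk; apply: abs_le_sq => //; apply: le_trans _ hk; exact: CS. Qed.

Lemma cs1 th : cos th ^+ 2 + sin th ^+ 2 = 1. Proof. exact: cos2Dsin2. Qed.
Lemma cs2 th : cos th ^+ 2 + (- sin th) ^+ 2 = 1. Proof. by rewrite sqrrN cos2Dsin2. Qed.
Lemma cs3 th : (- sin th) ^+ 2 + cos th ^+ 2 = 1. Proof. by rewrite sqrrN addrC cos2Dsin2. Qed.

Lemma oboxE c a b th p : obox c a b th p <-> `|Uc c th p| <= a /\ `|Vc c th p| <= b.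
Proof.
split.
  case=> u [v [hu [hv ->]]]; rewrite /Uc /Vc /=.
  have -> : c.1 + u * cos th - v * sin th - c.1 = u * cos th - v * sin th by ring.
  have -> : c.2 + u * sin th + v * cos th - c.2 = u * sin th + v * cos th by ring.
  by rewrite rot3 ?rot4 ?cs1.
case=> hu hv; exists (Uc c th p), (Vc c th p); do 2 split => //.
case: p hu hv => p1 p2 hu hv; rewrite /Uc /Vc /=; congr (_, _).
  by rewrite -addrA rot1 ?cs1 //; ring.
by rewrite -addrA rot2 ?cs1 //; ring.
Qed.

Lemma Ulin c th z x : Uc c th z = Uc c th x + (cos th * (z.1 - x.1) + sin th * (z.2 - x.2)).
Proof. rewrite /Uc; ring. Qed.
Lemma Vlin c th z x : Vc c th z = Vc c th x + (- sin th * (z.1 - x.1) + cos th * (z.2 - x.2)).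
Proof. rewrite /Vc; ring. Qed.

Lemma sq_of_abs {d r : R} : `|d| <= r -> d^+2 <= r^+2.
Proof. rewrite ler_norml => /andP [h1 h2]; nra. Qed.

Lemma cs4 th : sin th ^+ 2 + cos th ^+ 2 = 1. Proof. by rewrite addrC cos2Dsin2. Qed.

Lemma near_out c a b th x : ~ obox c a b th x ->
  exists2 r, 0 < r & forall z, `|z.1 - x.1| <= r -> `|z.2 - x.2| <= r ->
    ~ obox c a b th z.
Proof.
move=> hx.
have [h|h] : a < `|Uc c th x| \/ b < `|Vc c th x|.
  case: (lerP `|Uc c th x| a) => h1; last by left.
  case: (lerP `|Vc c th x| b) => h2; last by right.
  by exfalso; apply: hx; apply/oboxE.
- have r0 : 0 < (`|Uc c th x| - a) / 4 by lra.
  move: r0; set r := (`|Uc c th x| - a) / 4 => r0; exists r => //.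
  move=> z h1 h2 /oboxE [hu _].
  have hw : `|cos th * (z.1 - x.1) + sin th * (z.2 - x.2)| <= 2 * r.
    apply: CSk; first exact: cs1; first lra.
    have := sq_of_abs h1; have := sq_of_abs h2; nra.
  have := ler_normB (Uc c th z) (cos th * (z.1 - x.1) + sin th * (z.2 - x.2)).
  rewrite [X in `|X - _|](Ulin c th z x) addrK; rewrite /r in hw; lra.
- have r0 : 0 < (`|Vc c th x| - b) / 4 by lra.
  move: r0; set r := (`|Vc c th x| - b) / 4 => r0; exists r => //.
  move=> z h1 h2 /oboxE [_ hv].
  have hw : `|- sin th * (z.1 - x.1) + cos th * (z.2 - x.2)| <= 2 * r.
    apply: CSk; first exact: cs3; first lra.
    have := sq_of_abs h1; have := sq_of_abs h2; nra.
  have := ler_normB (Vc c th z) (- sin th * (z.1 - x.1) + cos th * (z.2 - x.2)).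
  rewrite [X in `|X - _|](Vlin c th z x) addrK; rewrite /r in hw; lra.
Qed.

Lemma square_in_box c a b th x (eps : R) : 0 < a -> 0 < b -> 0 < eps ->
  obox c a b th x ->
  exists y, exists2 e, 0 < e & forall z, `|z.1 - y.1| <= e -> `|z.2 - y.2| <= e ->
    [/\ obox c a b th z, `|z.1 - x.1| <= eps & `|z.2 - x.2| <= eps].
Proof.
move=> a0 b0 eps0 /oboxE [hux hvx].
set e := Num.min (eps / 4) (Num.min (a / 4) (b / 4)).
have e0 : 0 < e by rewrite /e !lt_min; apply/and3P; split; lra.
have e1 : e <= eps / 4 by rewrite /e ge_min lexx.
have e2 : e <= a / 4 by rewrite /e !ge_min lexx orbT.
have e3 : e <= b / 4 by rewrite /e !ge_min lexx !orbT.
set du := if 0 <= Uc c th x then - (2 * e) else 2 * e.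
set dv := if 0 <= Vc c th x then - (2 * e) else 2 * e.
have du2 : du ^+ 2 = (2 * e) ^+ 2 by rewrite /du; case: ifP => _; rewrite ?sqrrN.
have dv2 : dv ^+ 2 = (2 * e) ^+ 2 by rewrite /dv; case: ifP => _; rewrite ?sqrrN.
set y : R * R := (x.1 + (du * cos th - dv * sin th), x.2 + (du * sin th + dv * cos th)).
have ey1 : y.1 - x.1 = du * cos th - dv * sin th by rewrite /= addrC addKr.
have ey2 : y.2 - x.2 = du * sin th + dv * cos th by rewrite /= addrC addKr.
have Uy : Uc c th y = Uc c th x + du by rewrite (Ulin c th y x) ey1 ey2 rot3 // cs1.
have Vy : Vc c th y = Vc c th x + dv by rewrite (Vlin c th y x) ey1 ey2 rot4 // cs1.
have hUy : `|Uc c th y| <= a - 2 * e.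
  move: hux; rewrite Uy /du !ler_norml; case: ifP => h /andP [h1 h2]; apply/andP; split; lra.
have hVy : `|Vc c th y| <= b - 2 * e.
  move: hvx; rewrite Vy /dv !ler_norml; case: ifP => h /andP [h1 h2]; apply/andP; split; lra.
have hyx1 : `|y.1 - x.1| <= 3 * e.
  rewrite ey1 (_ : du * cos th - dv * sin th = cos th * du + (- sin th) * dv); last by ring.
  apply: CSk; [exact: cs2 | lra | rewrite du2 dv2; nra].
have hyx2 : `|y.2 - x.2| <= 3 * e.
  rewrite ey2 (_ : du * sin th + dv * cos th = sin th * du + cos th * dv); last by ring.
  apply: CSk; [exact: cs4 | lra | rewrite du2 dv2; nra].
exists y, e => // z h1 h2.
have hd : (z.1 - y.1) ^+ 2 + (z.2 - y.2) ^+ 2 <= (2 * e) ^+ 2.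
  have := sq_of_abs h1; have := sq_of_abs h2; nra.
have e20 : 0 <= 2 * e by lra.
split.
- apply/oboxE; split.
  + rewrite (Ulin c th z y).
    have := CSk (cs1 th) e20 hd.
    have := ler_normD (Uc c th y) (cos th * (z.1 - y.1) + sin th * (z.2 - y.2)); lra.
  + rewrite (Vlin c th z y).
    have := CSk (cs3 th) e20 hd.
    have := ler_normD (Vc c th y) (- sin th * (z.1 - y.1) + cos th * (z.2 - y.2)); lra.
- rewrite (_ : z.1 - x.1 = (z.1 - y.1) + (y.1 - x.1)); last by ring.
  have := ler_normD (z.1 - y.1) (y.1 - x.1); lra.
- rewrite (_ : z.2 - x.2 = (z.2 - y.2) + (y.2 - x.2)); last by ring.
  have := ler_normD (z.2 - y.2) (y.2 - x.2); lra.
Qed.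

End Geo.
Arguments Uc {R}. Arguments Ulin {R}. Arguments Vlin {R}. Arguments Vc {R}. Arguments sq_of_abs {R d r}. Arguments CSk {R c s x y k}.

Section Meas.
Variable R : realType.
Implicit Types (c p y : R * R) (a b th : R).

Definition sq (y : R * R) (e : R) : set (R * R) :=
  `[y.1 - e, y.1 + e]%classic `*` `[y.2 - e, y.2 + e]%classic.

Lemma rho_meas : measurable_fun [set: R * R] (@rho R).
Proof.
rewrite (_ : @rho R = Num.sqrt \o (fun p : R * R => p.1 ^+ 2 + p.2 ^+ 2)); last by [].
apply: measurableT_comp.
  exact: measurable_realfun.continuous_measurable_fun (@sqrt_continuous R).
apply: measurable_realfun.measurable_funD; apply: measurable_realfun.measurable_funX.
  exact: measurable_fst.
exact: measurable_snd.
Qed.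

Lemma lin_meas (k1 k2 d1 d2 : R) :
  measurable_fun [set: R * R] (fun p : R * R => k1 * (p.1 - d1) + k2 * (p.2 - d2)).
Proof.
apply: measurable_realfun.measurable_funD; apply: measurable_realfun.measurable_funM;
  try exact: measurable_cst.
  by apply: measurable_realfun.measurable_funB; [exact: measurable_fst|exact: measurable_cst].
by apply: measurable_realfun.measurable_funB; [exact: measurable_snd|exact: measurable_cst].
Qed.

Lemma obox_meas c a b th : measurable (obox c a b th).
Proof.
have -> : obox c a b th =
    ([set: R * R] `&` Uc c th @^-1` `[- a, a]%classic) `&`
    ([set: R * R] `&` Vc c th @^-1` `[- b, b]%classic).
  apply/seteqP; split=> p /=.
    by move/oboxE => [hu hv]; rewrite !in_itv /= -!ler_norml.
  by rewrite !in_itv /= -!ler_norml => -[[_ hu] [_ hv]]; apply/oboxE.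
apply: measurableI.
  exact: (lin_meas (cos th) (sin th) c.1 c.2) measurableT _ (measurable_itv _).
exact: (lin_meas (- sin th) (cos th) c.1 c.2) measurableT _ (measurable_itv _).
Qed.

Lemma sq_meas y e : measurable (sq y e).
Proof. exact: measurableX (measurable_itv _) (measurable_itv _). Qed.

Lemma leb2_sq y e : 0 < e -> leb2 (sq y e) = ((2 * e) * (2 * e))%:E.
Proof.
move=> e0; rewrite /leb2 /sq product_measure1E; try exact: measurable_itv.
have h1 : (@lebesgue_measure R `[y.1 - e, y.1 + e]%classic = (2*e)%:E).
  rewrite lebesgue_measure_itv /= lte_fin ifT; last lra.
  rewrite -EFinB; congr EFin; ring.
have h2 : (@lebesgue_measure R `[y.2 - e, y.2 + e]%classic = (2*e)%:E).
  rewrite lebesgue_measure_itv /= lte_fin ifT; last lra.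
  rewrite -EFinB; congr EFin; ring.
rewrite EFinM; apply: f_equal2.
  exact: h1.
exact: h2.
Qed.

Lemma in_sq y e z : sq y e z <-> `|z.1 - y.1| <= e /\ `|z.2 - y.2| <= e.
Proof.
rewrite /sq /= !in_itv /= !ler_norml.
split=> -[/andP [h1 h2] /andP [h3 h4]]; split; apply/andP; split; lra.
Qed.

Lemma obox_sub_sq c a b th : 0 <= a -> 0 <= b -> obox c a b th `<=` sq c (a + b).
Proof.
move=> a0 b0 p [u [v [hu [hv ->]]]]; apply/in_sq => /=.
have huv : u ^+ 2 + v ^+ 2 <= (a + b) ^+ 2.
  have := sq_of_abs hu; have := sq_of_abs hv; have := normr_ge0 u; have := normr_ge0 v.
  move: hu hv; rewrite !ler_norml => /andP [? ?] /andP [? ?]; nra.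
split.
  rewrite (_ : c.1 + u * cos th - v * sin th - c.1 = cos th * u + (- sin th) * v); last by ring.
  by apply: CSk => //; [exact: cs2 | lra].
rewrite (_ : c.2 + u * sin th + v * cos th - c.2 = sin th * u + cos th * v); last by ring.
by apply: CSk => //; [exact: cs4 | lra].
Qed.

Lemma obox_fin c a b th : 0 < a -> 0 < b -> (leb2 (obox c a b th) < +oo)%E.
Proof.
move=> a0 b0.
apply: (@le_lt_trans _ _ (leb2 (sq c (a + b)))).
  apply: le_measure; rewrite ?inE; [exact: obox_meas | exact: sq_meas | apply: obox_sub_sq; lra].
by rewrite leb2_sq ?ltry //; lra.
Qed.

End Meas.
Arguments sq {R}. Arguments obox_sub_sq {R c a b th}. Arguments obox_meas {R}. Arguments obox_fin {R}. Arguments sq_meas {R}. Arguments leb2_sq {R}. Arguments in_sq {R}.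

Section Weight.
Variable R : realType.
Implicit Types (c p y : R * R) (a b th : R).

Lemma rho_ge0 p : 0 <= rho p. Proof. exact: sqrtr_ge0. Qed.
Lemma rho_sq p : rho p ^+ 2 = p.1 ^+ 2 + p.2 ^+ 2.
Proof. by rewrite /rho sqr_sqrtr // addr_ge0 // sqr_ge0. Qed.
Lemma rho_le p (k : R) : 0 <= k -> p.1 ^+ 2 + p.2 ^+ 2 <= k ^+ 2 -> rho p <= k.
Proof.
move=> k0 h; rewrite /rho -(ger0_norm k0) -sqrtr_sqr ler_sqrt //; exact: sqr_ge0.
Qed.

Lemma center_in c a b th : 0 <= a -> 0 <= b -> obox c a b th c.
Proof. by move=> a0 b0; apply/oboxE; rewrite /Uc /Vc !subrr !mulr0 addr0 normr0. Qed.

Lemma weight_bounds c a b th (alpha : R) : 0 <= alpha -> 0 < a -> 0 < b ->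
  ~ obox c a b th (0, 0) ->
  exists m M, [/\ 0 < m, 0 < rho c, (forall p, obox c a b th p -> 0 < rho p) &
    forall p, obox c a b th p -> m <= ec_weight alpha c p <= M].
Proof.
move=> al0 a0 b0 h0.
set o : R * R := (0, 0).
have [d d0 hd] : exists2 d, 0 < d & forall p, obox c a b th p -> d <= rho p.
  have [h|h] : a < `|Uc c th o| \/ b < `|Vc c th o|.
    case: (lerP `|Uc c th o| a) => h1; last by left.
    case: (lerP `|Vc c th o| b) => h2; last by right.
    by exfalso; apply: h0; apply/oboxE.
  - exists (`|Uc c th o| - a); first lra.
    move=> p /oboxE [hu _].
    have hw : `|cos th * (p.1 - o.1) + sin th * (p.2 - o.2)| <= rho p.
      apply: CSk; [exact: cs1 | exact: rho_ge0 | by rewrite /= !subr0 rho_sq].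
    have := ler_normB (Uc c th p) (cos th * (p.1 - o.1) + sin th * (p.2 - o.2)).
    rewrite [X in `|X - _|](Ulin c th p o) addrK; lra.
  - exists (`|Vc c th o| - b); first lra.
    move=> p /oboxE [_ hv].
    have hw : `|- sin th * (p.1 - o.1) + cos th * (p.2 - o.2)| <= rho p.
      apply: CSk; [exact: cs3 | exact: rho_ge0 | by rewrite /= !subr0 rho_sq].
    have := ler_normB (Vc c th p) (- sin th * (p.1 - o.1) + cos th * (p.2 - o.2)).
    rewrite [X in `|X - _|](Vlin c th p o) addrK; lra.
have [K K0 hK] : exists2 K, 0 < K & forall p, obox c a b th p -> rho p <= K.
  exists (`|c.1| + `|c.2| + 2 * (a + b)).
    have := normr_ge0 c.1; have := normr_ge0 c.2; lra.
  move=> p hp; have /in_sq [h1 h2] := obox_sub_sq (ltW a0) (ltW b0) p hp.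
  have := normr_ge0 c.1; have := normr_ge0 c.2 => n1 n2.
  apply: rho_le; first lra.
  have k1 : `|p.1| <= `|c.1| + (a + b).
    have := ler_normD c.1 (p.1 - c.1); rewrite addrC subrK; lra.
  have k2 : `|p.2| <= `|c.2| + (a + b).
    have := ler_normD c.2 (p.2 - c.2); rewrite addrC subrK; lra.
  have := sq_of_abs k1; have := sq_of_abs k2; nra.
have rc : 0 < rho c by apply: lt_le_trans d0 (hd _ (center_in c a b th (ltW a0) (ltW b0))).
have rp : forall p, obox c a b th p -> 0 < rho p by move=> p hp; apply: lt_le_trans d0 (hd _ hp).
exists ((rho c / K) `^ alpha), ((rho c / d) `^ alpha); split => //.
  by apply: powR_gt0; rewrite divr_gt0.
move=> p hp; have := hd p hp; have := hK p hp; have := rp p hp => r0 hk hdp.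
rewrite /ec_weight; apply/andP; split; apply: ge0_ler_powR => //;
  rewrite ?nnegrE ?divr_ge0 ?(ltW rc) ?(ltW r0) ?(ltW K0) ?(ltW d0) //;
  (apply: ler_wpM2l; first exact: ltW rc); rewrite lef_pV2 ?posrE //.
Qed.

Lemma weight_meas c (alpha : R) (D : set (R * R)) : measurable D -> 0 < rho c ->
  (forall p, D p -> 0 < rho p) ->
  measurable_fun D (EFin \o ec_weight alpha c).
Proof.
move=> mD rc hD; apply/measurable_realfun.measurable_EFinP.
have mT : measurable_fun [set: R * R]
    (fun p : R * R => expR (alpha * (ln (rho c) - ln (rho p)))).
  apply: measurableT_comp; first exact: measurable_realfun.measurable_expR.
  apply: (@measurable_realfun.measurable_funM _ _ _ _ (fun=> alpha)
           (fun p => ln (rho c) - ln (rho p))); first exact: measurable_cst.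
  apply: (@measurable_realfun.measurable_funB _ _ _ _ (fun=> ln (rho c))
           (fun p => ln (rho p))); first exact: measurable_cst.
  apply: measurableT_comp; first exact: measurable_realfun.measurable_ln.
  exact: rho_meas.
have mD' := measurable_funS measurableT (@subsetT _ D) mT.
move: mD'; apply: eq_measurable_fun.
  move=> p; rewrite inE => /hD rp.
  rewrite /ec_weight /powR gt_eqF ?divr_gt0 // lnM ?posrE ?invr_gt0 // lnV ?posrE //.
Qed.

End Weight.
Arguments weight_meas {R}. Arguments center_in {R}.

Theorem lemma3 (R : realType) (alpha : R)
  (cG : R * R) (aG bG thG : R) (cP : R * R) (aP bP thP : R) :
  0 <= alpha ->
  0 < aG -> 0 < bG -> ~ obox cG aG bG thG (0, 0) ->
  0 < aP -> 0 < bP ->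
  EC_IoU alpha (obox cP aP bP thP) (obox cG aG bG thG) cG = 1 <->
  obox cP aP bP thP = obox cG aG bG thG.
Proof.
move=> al0 aG0 bG0 h0 aP0 bP0.
have [m [M [m0 rc rpos hw]]] := @weight_bounds R cG aG bG thG alpha al0 aG0 bG0 h0.
have mG := obox_meas cG aG bG thG.
have mP := obox_meas cP aP bP thP.
have finG := obox_fin cG aG bG thG aG0 bG0.
have finP := obox_fin cP aP bP thP aP0 bP0.
set G := obox cG aG bG thG in h0 hw rpos mG finG *.
set P := obox cP aP bP thP in mP finP *.
have mPG : measurable (P `&` G) by exact: measurableI.
have mGP : measurable (G `\` P) by exact: measurableD.
have mPmG : measurable (P `\` G) by exact: measurableD.
set f := fun p : R * R => (ec_weight alpha cG p)%:E.
have f0 : forall p, (0 <= f p)%E by move=> p; rewrite lee_fin powR_ge0.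
have mf : forall D : set (R * R), measurable D -> D `<=` G -> measurable_fun D f.
  move=> D mD DG; apply: (weight_meas cG alpha D mD rc) => p /DG; exact: rpos.
have Ile : forall D : set (R * R), measurable D -> D `<=` G ->
    (\int[@leb2 R]_(p in D) f p <= M%:E * leb2 D)%E.
  move=> D mD DG; rewrite -integral_cst //; apply: ge0_le_integral => //;
    try (exact: mf); try (exact: measurable_cst).
  by move=> p /DG /hw /andP [_ h]; rewrite /f lee_fin.
have Ige : forall Q D : set (R * R), measurable Q -> measurable D -> Q `<=` D -> D `<=` G ->
    (m%:E * leb2 Q <= \int[@leb2 R]_(p in D) f p)%E.
  move=> Q D mQ mD QD DG; rewrite -integral_cst //.
  have h2 : (\int[@leb2 R]_(p in Q) f p <= \int[@leb2 R]_(p in D) f p)%E.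
    by apply: ge0_subset_integral => //; exact: mf.
  apply: le_trans h2.
    apply: ge0_le_integral => //; try (exact: measurable_cst);
      try (by move=> p _; rewrite lee_fin ltW);
      try (by apply: mf => //; exact: subset_trans DG).
    by move=> p /QD /DG /hw /andP [h _]; rewrite /f lee_fin.
have measfin : forall D : set (R * R), measurable D -> D `<=` G \/ D `<=` P -> leb2 D \is a fin_num.
  move=> D mD [DG|DP]; rewrite ge0_fin_numE ?measure_ge0 //.
    apply: le_lt_trans finG; apply: le_measure => //; rewrite inE //.
  apply: le_lt_trans finP; apply: le_measure => //; rewrite inE //.
have Ifin : forall D : set (R * R), measurable D -> D `<=` G ->
    (\int[@leb2 R]_(p in D) f p)%E \is a fin_num.
  move=> D mD DG; rewrite ge0_fin_numE ?integral_ge0 //.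
  apply: le_lt_trans (Ile D mD DG) _.
  rewrite -ge0_fin_numE; first by rewrite fin_numM // measfin //; left.
  by rewrite mule_ge0 // ?lee_fin ?measure_ge0 //; apply: le_trans (ltW m0) _;
    have /hw /andP [h1 h2] := center_in cG aG bG thG (ltW aG0) (ltW bG0); lra.
have split_int : (\int[@leb2 R]_(p in G) f p =
    \int[@leb2 R]_(p in P `&` G) f p + \int[@leb2 R]_(p in G `\` P) f p)%E.
  have eG : G = (P `&` G) `|` (G `\` P).
    apply/seteqP; split => x /=.
      by move=> gx; case: (pselect (P x)) => px; [left | right].
    by case=> -[].
  rewrite {1}eG ge0_integral_setU //.
  - apply: mf; first exact: measurableU.
    by move=> x /= [[]|[]].
  - by apply/eqP/seteqP; split => x // -[[px _] [_ npx]].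
have split_meas : leb2 P = (leb2 (P `\` G) + leb2 (P `&` G))%E by exact: measureDI.
have [A eA] : exists A, (\int[@leb2 R]_(p in P `&` G) f p)%E = A%:E.
  by exists (fine (\int[@leb2 R]_(p in P `&` G) f p)%E); rewrite fineK // Ifin //; move=> x [].
have [B eB] : exists B, (\int[@leb2 R]_(p in G `\` P) f p)%E = B%:E.
  by exists (fine (\int[@leb2 R]_(p in G `\` P) f p)%E); rewrite fineK // Ifin //; move=> x [].
have [X eX] : exists X, leb2 (P `&` G) = X%:E.
  by exists (fine (leb2 (P `&` G))); rewrite fineK // measfin //; left => x [].
have [Y eY] : exists Y, leb2 (P `\` G) = Y%:E.
  by exists (fine (leb2 (P `\` G))); rewrite fineK // measfin //; right => x [].
have A0 : 0 <= A by rewrite -lee_fin -eA integral_ge0.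
have B0 : 0 <= B by rewrite -lee_fin -eB integral_ge0.
have Y0 : 0 <= Y by rewrite -lee_fin -eY measure_ge0.
have EC : EC_IoU alpha P G cG = A / (A + B + (Y + X) - X).
  rewrite /EC_IoU /Weighted_Area /Area.
  rewrite -/f split_int split_meas eA eB eX eY.
  by rewrite -!EFinD.
rewrite EC; split.
- move=> h.
  have Dn0 : A + B + (Y + X) - X != 0.
    apply/eqP => e; move: h; rewrite e invr0 mulr0 => /esym/eqP.
    by rewrite oner_eq0.
  have := divfK Dn0 A; rewrite h mul1r => eAD.
  have B00 : B = 0 by lra.
  have Y00 : Y = 0 by lra.
  apply/seteqP; split => x hx.
  + case: (pselect (G x)) => // hnG; exfalso.
    have [r r0 hr] := @near_out R _ _ _ _ _ hnG.
    have [y [e e0 hz]] := @square_in_box R cP aP bP thP x r aP0 bP0 r0 hx.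
    have sub : sq y e `<=` P `\` G.
      move=> z /in_sq [h1 h2]; have [pz h3 h4] := hz z h1 h2; split => //; exact: hr.
    have : (leb2 (sq y e) <= leb2 (P `\` G))%E.
      by apply: le_measure; rewrite ?inE //; exact: sq_meas.
    rewrite eY Y00 leb2_sq // lee_fin; nra.
  + case: (pselect (P x)) => // hnP; exfalso.
    have [r r0 hr] := @near_out R _ _ _ _ _ hnP.
    have [y [e e0 hz]] := @square_in_box R cG aG bG thG x r aG0 bG0 r0 hx.
    have sub : sq y e `<=` G `\` P.
      move=> z /in_sq [h1 h2]; have [pz h3 h4] := hz z h1 h2; split => //; exact: hr.
    have := Ige (sq y e) (G `\` P) (sq_meas y e) mGP sub (fun z => @proj1 _ _).
    rewrite eB B00 leb2_sq // -EFinM lee_fin => H.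
    have he : 0 < 2 * e * (2 * e) by nra.
    have := mulr_gt0 m0 he; lra.
- move=> hPG.
  have B00 : B = 0.
    have : (B%:E = 0%E) by rewrite -eB hPG setDv integral_set0.
    by case.
  have Y00 : Y = 0.
    have : (Y%:E = 0%E) by rewrite -eY hPG setDv; exact: measure0.
    by case.
  have cin := center_in cG aG bG thG (ltW aG0) (ltW bG0).
  have [y [e e0 hz]] := @square_in_box R cG aG bG thG cG 1 aG0 bG0 ltr01 cin.
  have sub : sq y e `<=` P `&` G.
    move=> z /in_sq [h1 h2]; have [gz _ _] := hz z h1 h2; split => //; by rewrite hPG.
  have := Ige (sq y e) (P `&` G) (sq_meas y e) mPG sub (fun z => @proj2 _ _).
  rewrite eA leb2_sq // -EFinM lee_fin => hA.
  have he : 0 < 2 * e * (2 * e) by nra.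
  have Apos : 0 < A by have := mulr_gt0 m0 he; lra.
  rewrite B00 Y00 (_ : A + 0 + (0 + X) - X = A); last by ring.
  by rewrite divff // gt_eqF.
Qed.
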